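(* For every integer $n\ge 1$, the number of lines in $\mathbb{Z}_n^2$ equals $\psi(n^2)$, where $\psi:\mathbb{N}\to\mathbb{N}$ is the multiplicative function with $\psi(1)=1$ and $\psi(p^k)=(p+1)p^{k-1}$ for prime powers $p^k>1$.
   Context: $\mathbb{Z}_n=\mathbb{Z}/n\mathbb{Z}$. A line in $\mathbb{Z}_n^2$ is a translate (as a set) of a cyclic subgroup of order $n$ of the additive group $\mathbb{Z}_n^2$. A function $\psi$ is multiplicative if $\psi(1)=1$ and $\psi(nm)=\psi(n)\psi(m)$ for coprime $n,m$. *)

(* Defs.v *)
From HB Require Import structures.
From mathcomp Require Import all_boot all_order all_algebra.
Set Implicit Arguments. Unset Strict Implicit. Unset Printing Implicit Defensive.
Import GRing.Theory.

(* Z_n for n >= 1, as the additive group 'I_(n.-1).+1 (integers mod n). *)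
Notation Zn2 n := ('I_(n.-1).+1 * 'I_(n.-1).+1)%type.

(* The cyclic subgroup <g> of Z_n^2 generated by g: all multiples k*g
   (k ranges over 0..n^2, which covers all multiples since n^2 g = 0). *)
Definition cyc (n : nat) (g : Zn2 n) : {set Zn2 n} :=
  [set (g *+ k)%R | k : 'I_(n ^ 2).+1].

Definition translate (n : nat) (x : Zn2 n) (H : {set Zn2 n}) : {set Zn2 n} :=
  [set (x + h)%R | h in H].

Definition lines (n : nat) : {set {set Zn2 n}} :=
  [set L : {set Zn2 n} | [exists x : Zn2 n, exists g : Zn2 n,
     (#|cyc g| == n) && (L == translate x (cyc g))]].

Definition psi (m : nat) : nat :=
  \prod_(p <- primes m) ((p + 1) * p ^ (logn p m).-1).

(* Main.v *)
Require Import Defs.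
From mathcomp Require Import all_boot all_order all_algebra all_fingroup all_solvable.
From mathcomp Require Import zify.
Set Implicit Arguments. Unset Strict Implicit.
Definition cnt (n : nat) : nat :=
  \sum_(0 <= a < n) \sum_(0 <= b < n) coprime n (gcdn a b).

Lemma per1 (G : nat -> nat) m k :
  (forall a, G (a %% m) = G a) ->
  \sum_(0 <= a < k * m) G a = k * \sum_(0 <= a < m) G a.
Proof.
move=> HG; elim: k => [|k IH]; first by rewrite !mul0n big_geq.
rewrite (big_cat_nat _ (n := k * m)) //=; last by rewrite mulSn leq_addl.
rewrite IH mulSn addnC; congr (_ + _).
rewrite -{1}(add0n (k * m)) big_addn.
have -> : m + k * m - k * m = m by rewrite addnK.
apply: eq_bigr => i _; rewrite -HG.
have -> : (i + k * m) %% m = i %% m by rewrite addnC modnMDl.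
by rewrite HG.
Qed.

Lemma per2 (F : nat -> nat -> nat) m k :
  (forall a b, F (a %% m) b = F a b) -> (forall a b, F a (b %% m) = F a b) ->
  \sum_(0 <= a < k * m) \sum_(0 <= b < k * m) F a b =
  k * k * \sum_(0 <= a < m) \sum_(0 <= b < m) F a b.
Proof.
move=> Ha Hb.
rewrite (@per1 (fun a => \sum_(0 <= b < k * m) F a b)); last first.
  by move=> a; apply: eq_bigr => b _; rewrite Ha.
rewrite -mulnA; congr (_ * _); rewrite big_distrr /=.
by apply: eq_bigr => a _; rewrite per1.
Qed.

Lemma cop_modl m a b : coprime m (gcdn (a %% m) b) = coprime m (gcdn a b).
Proof. by rewrite /coprime !gcdnA gcdn_modr. Qed.

Lemma cop_modr m a b : coprime m (gcdn a (b %% m)) = coprime m (gcdn a b).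
Proof. by rewrite /coprime gcdnCA gcdn_modr gcdnCA. Qed.

Lemma cnt_R1 p m : prime p -> p %| m -> cnt (p * m) = p * p * cnt m.
Proof.
move=> pp pm; rewrite /cnt -per2; last 2 first.
- by move=> a b; rewrite cop_modl.
- by move=> a b; rewrite cop_modr.
apply: eq_bigr => a _; apply: eq_bigr => b _.
rewrite coprimeMl; case H: (coprime m _); rewrite ?andbF ?andbT //.
by rewrite (coprime_dvdl pm H).
Qed.

Lemma sub1 (G : nat -> nat) p m : prime p ->
  \sum_(0 <= a < p * m) (p %| a) * G a = \sum_(0 <= a < m) G (p * a).
Proof.
move=> pp; have p0 := prime_gt0 pp.
elim: m => [|m IH]; first by rewrite muln0 !big_geq.
rewrite mulnS addnC (big_cat_nat _ (n := p * m)) //=; last by rewrite leq_addr.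
rewrite IH big_nat_recr //=; congr (_ + _).
rewrite -{1}(add0n (p * m)) big_addn.
have -> : p * m + p - p * m = p by rewrite addKn.
rewrite big_ltn //= add0n (dvdn_mulr _ (dvdnn p)) mul1n big1_seq ?addn0 //.
move=> i /andP [_]; rewrite mem_iota => /andP [i1 ip].
rewrite dvdn_addl ?(dvdn_mulr _ (dvdnn p)) //.
case: (ltnP 0 i) => [i0|]; last by case: i i1 {ip}.
suff -> : (p %| i) = false by [].
apply/negP => /(dvdn_leq i0); lia.
Qed.

Lemma cnt_R2 p m : prime p -> ~~ (p %| m) -> cnt (p * m) + cnt m = p * p * cnt m.
Proof.
move=> pp npm.
have cpm : coprime m p by rewrite coprime_sym prime_coprime.
rewrite /cnt -per2; last 2 first.
- by move=> a b; rewrite cop_modl.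
- by move=> a b; rewrite cop_modr.
have E : forall a b, coprime (p * m) (gcdn a b) + (p %| a) * ((p %| b) * coprime m (gcdn a b))
   = coprime m (gcdn a b).
  move=> a b; rewrite coprimeMl prime_coprime // dvdn_gcd.
  by case: (p %| a); case: (p %| b); case: (coprime m _).
rewrite -[in RHS](eq_bigr _ (fun a _ => eq_bigr _ (fun b _ => E a b))).
rewrite [in RHS](eq_bigr _ (fun a _ => big_split _ _ _ _ _)) /= big_split /=.
congr (_ + _).
symmetry; transitivity (\sum_(0 <= a < p * m) (p %| a) * \sum_(0 <= b < p * m) (p %| b) * coprime m (gcdn a b)).
  by apply: eq_bigr => a _; rewrite big_distrr.
rewrite sub1 //.
apply: eq_bigr => a _; rewrite sub1 //; apply: eq_bigr => b _.
by rewrite -muln_gcdr coprimeMr cpm.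
Qed.
Lemma Mult (V : nat -> nat) (f r : nat -> nat -> nat) N :
  (forall q, f q 0 = 1) -> V 1 = 1 ->
  (forall p e, prime p -> f p e.+1 = r p e * f p e) ->
  (forall p m, prime p -> 0 < m -> V (p * m) = r p (logn p m) * V m) ->
  forall n, 0 < n -> n < N -> V n = \prod_(q < N | prime q) f q (logn q n).
Proof.
move=> f0 V1 fS VS n; elim: n {-2}n (leqnn n) => [|k IH] n.
  by rewrite leqn0 => /eqP ->.
move=> nk n0 nN.
case: (ltnP 1 n) => n1; last first.
  have -> : n = 1 by lia.
  by rewrite V1 big1 // => q _; rewrite logn1 f0.
set p := pdiv n; have pp : prime p := pdiv_prime n1.
have p0 := prime_gt0 pp.
set m := n %/ p.
have nE : n = p * m by rewrite mulnC divnK // pdiv_dvd.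
have m0 : 0 < m by rewrite divn_gt0 // dvdn_leq // pdiv_dvd.
have mn : m < n by apply: ltn_Pdiv => //; apply: prime_gt1.
have pN : p < N by apply: leq_ltn_trans nN; apply: dvdn_leq => //; apply: pdiv_dvd.
rewrite nE VS // (IH m) //; last 2 first.
- lia.
- lia.
rewrite (bigD1 (Ordinal pN)) //= [in RHS](bigD1 (Ordinal pN)) //=.
rewrite mulnA (lognM p p0 m0) (logn_prime p pp) eqxx add1n fS //; congr (_ * _).
apply: eq_bigr => q /andP [qp qne].
rewrite (lognM (nat_of_ord q) p0 m0) (logn_prime (nat_of_ord q) pp).
have -> : (nat_of_ord q == p) = false.
  by apply/negP => /eqP qe; move: qne; rewrite -val_eqE /= qe eqxx.
by rewrite add0n.
Qed.

Lemma Conv n N (F : nat -> nat -> nat) : 0 < n -> n < N -> (forall q, F q 0 = 1) ->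
  \prod_(p <- primes n) F p (logn p n) = \prod_(q < N | prime q) F q (logn q n).
Proof.
move=> n0 nN F0.
rewrite -(@big_mkord _ 1 muln N prime (fun q => F q (logn q n))).
have -> : \prod_(0 <= q < N | prime q) F q (logn q n) =
          \prod_(0 <= q < N | q \in primes n) F q (logn q n).
  rewrite big_mkcond [in RHS]big_mkcond; apply: eq_bigr => q _.
  case pq: (prime q); case qn: (q \in primes n) => //.
    by move: qn; rewrite -logn_gt0 => /negbT; rewrite -leqNgt leqn0 => /eqP ->.
  by move: qn; rewrite mem_primes pq.
etransitivity; last by apply: big_filter.
apply: perm_big.
apply: uniq_perm; first exact: primes_uniq.
  by apply: filter_uniq; apply: iota_uniq.
move=> q; rewrite mem_filter mem_iota add0n.
case qn: (q \in primes n) => //=.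
move: qn; rewrite mem_primes => /and3P [_ _ qd].
by rewrite subn0 (leq_ltn_trans (dvdn_leq n0 qd) nN).
Qed.

Definition cf q e := if e is e'.+1 then (q * q - 1) * q ^ (2 * e') else 1.
Definition tf q e := if e is e'.+1 then q.-1 * q ^ e' else 1.
Definition sf q e := if e is e'.+1 then (q + 1) * q ^ (2 * e').+1 else 1.

Lemma cnt_prod n N : 0 < n -> n < N ->
  cnt n = \prod_(q < N | prime q) cf q (logn q n).
Proof.
apply: (@Mult cnt cf (fun p e => if e is 0 then p * p - 1 else p * p)) => //.
- by rewrite /cnt big_nat1 big_nat1.
- move=> p [|e] pp /=; first by rewrite muln0.
  rewrite mulnS !expnS; move: (p * p - 1) (p ^ (2 * e)) => w z; nia.
- move=> p m pp m0.
  case: (boolP (p %| m)) => pm.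
    have : 0 < logn p m by rewrite logn_gt0 mem_primes pp m0.
    by case: (logn p m) => // e _; rewrite cnt_R1.
  have -> : logn p m = 0.
    by apply/eqP; rewrite -leqn0 leqNgt logn_gt0 mem_primes pp m0 /= pm.
  have := cnt_R2 pp pm; rewrite mulnBl mul1n; lia.
Qed.

Lemma id_prod n N : 0 < n -> n < N ->
  n = \prod_(q < N | prime q) q ^ (logn q n).
Proof.
apply: (@Mult id (fun q e => q ^ e) (fun p e => p)) => //.
by move=> p e _; rewrite expnS.
Qed.

Lemma tot_prod n N : 0 < n -> n < N ->
  totient n = \prod_(q < N | prime q) tf q (logn q n).
Proof.
move=> n0 nN; rewrite totientE // -(@Conv n N tf n0 nN) //.
apply: eq_big_seq => p; rewrite -logn_gt0.
by case: (logn p n).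
Qed.

Lemma psi_prod n N : 0 < n -> n < N ->
  psi (n ^ 2) = \prod_(q < N | prime q) sf q (logn q n).
Proof.
move=> n0 nN; rewrite /psi primesX // -(@Conv n N sf n0 nN) //.
apply: eq_big_seq => p; rewrite -logn_gt0 lognX.
case: (logn p n) => // e _ /=.
by congr (_ * _ ^ _); lia.
Qed.

Lemma cnt_main n : 0 < n -> cnt n * n = psi (n ^ 2) * totient n.
Proof.
move=> n0; have nN : n < n.+1 by [].
clear nN; have [N nN] : exists N, n < N by exists n.+1.
rewrite (cnt_prod n0 nN) (psi_prod n0 nN) (tot_prod n0 nN) [X in _ * X = _](id_prod n0 nN).
rewrite -!big_split /=; apply: eq_bigr => q qp.
have q1 := prime_gt1 qp.
case: (logn q n) => [|e] //=.
set X := q ^ e.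
have h1 : q ^ (2 * e) = X * X by rewrite mul2n -addnn expnD.
have h2 : q ^ (2 * e).+1 = q * (X * X) by rewrite expnS h1.
have h3 : q ^ e.+1 = q * X by rewrite expnS.
rewrite h1 h2 h3.
have X0 : 0 < X by rewrite expn_gt0 (ltnW q1).
clear h1 h2 h3; move: X X0 => X X0.
have -> : q.-1 = q - 1 by lia.
rewrite !mulnBl !mulnBr; nia.
Qed.
Section G.
Import GRing.Theory.
Variable m : nat.
Notation gT := ('I_m.+1 * 'I_m.+1)%type.

Lemma mulgE (x y : gT) : (x * y)%g = (x + y)%R.
Proof. by []. Qed.

Lemma expgE (x : gT) k : (x ^+ k)%g = (x *+ k)%R.
Proof. elim: k => [|k IH]; first by []. by rewrite expgS mulrS IH. Qed.

Lemma cyc_cycle (g : gT) : @cyc m.+1 g = <[g]>%g.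
Proof.
apply/setP => y; apply/imsetP/cycleP.
  by case=> k _ ->; exists k; rewrite expgE.
case=> i ->; exists (inord (i %% #[g]%g)) => //.
rewrite -expgE inordK ?expg_mod_order //.
have o0 := order_gt0 g.
have : #[g]%g %| #|[set: gT]| by apply: order_dvdG; rewrite inE.
rewrite cardsT card_prod card_ord => /dvdn_leq; rewrite muln_gt0 /= => /(_ isT) le.
have := ltn_pmod i o0; rewrite expnS expn1; lia.
Qed.

Lemma card_gT : #|[set: gT]| = m.+1 * m.+1.
Proof. by rewrite cardsT card_prod card_ord. Qed.

Lemma translate_lcoset (x : gT) (H : {set gT}) : @translate m.+1 x H = (x *: H)%g.
Proof. by rewrite /translate -lcosetE. Qed.

Lemma expg_eq1 (g : gT) k :
  ((g ^+ k)%g == 1%g) = (m.+1 %| g.1 * k) && (m.+1 %| g.2 * k).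
Proof.
have E : forall (g : gT) k, (g *+ k)%R = (g.1 *+ k, g.2 *+ k)%R.
  move=> h; elim=> [|j IH]; first by case: h.
  by rewrite !mulrS IH.
rewrite expgE E; case: g => a b /=.
have -> : (1%g : gT) = (0%R, 0%R) by [].
rewrite xpair_eqE !Zp_mulrn -!val_eqE /=.
by [].
Qed.


Lemma order_full (g : gT) : (#[g]%g == m.+1) = coprime m.+1 (gcdn g.1 g.2).
Proof.
have odvd : #[g]%g %| m.+1.
  by rewrite order_dvdn expg_eq1 !dvdn_mull.
apply/idP/idP => [/eqP og|cop].
  set d := gcdn m.+1 (gcdn g.1 g.2).
  have d0 : 0 < d by rewrite gcdn_gt0.
  have dn : d %| m.+1 by apply: dvdn_gcdl.
  have dab : d %| gcdn g.1 g.2 by apply: dvdn_gcdr.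
  have da : d %| g.1 by apply: dvdn_trans dab (dvdn_gcdl _ _).
  have db : d %| g.2 by apply: dvdn_trans dab (dvdn_gcdr _ _).
  set k := m.+1 %/ d.
  have nk : m.+1 = k * d by rewrite divnK.
  have : #[g]%g %| k.
    have nkd : m.+1 %| k * d by rewrite -nk.
    rewrite order_dvdn expg_eq1.
    by rewrite !(dvdn_trans nkd) // [_ * k]mulnC dvdn_mul.
  rewrite og => /dvdn_leq.
  have k0 : 0 < k by rewrite divn_gt0 // dvdn_leq.
  move=> /(_ k0) le.
  rewrite /coprime -/d; apply/eqP; nia.
have := dvdnn #[g]%g; rewrite order_dvdn expg_eq1 => /andP [h1 h2].
have : m.+1 %| gcdn (g.1 * #[g]%g) (g.2 * #[g]%g) by rewrite dvdn_gcd h1 h2.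
rewrite -muln_gcdl Gauss_dvdr // => nd.
by rewrite eqn_dvd odvd nd.
Qed.

Definition fL (L : {set gT}) : {set gT} := ((repr L)^-1 *: L)%g.

Lemma fL_coset x (H : {group gT}) : fL (x *: H)%g = H.
Proof.
rewrite /fL.
have := mem_repr _ (lcoset_refl H x) => /lcosetP [h hH ->].
rewrite -lcosetM invgM -mulgA mulVg mulg1 lcoset_id //.
by rewrite groupV.
Qed.

Definition Cs := [set H : {set gT} | [exists g : gT, (H == <[g]>%g) && (#[g]%g == m.+1)]].
Definition Es := [set g : gT | #[g]%g == m.+1].

Lemma lines_eq : lines m.+1 =
  [set L : {set gT} | [exists x : gT, exists g : gT, (#[g]%g == m.+1) && (L == x *: <[g]>)%g]].
Proof.
apply/setP => L; rewrite !inE.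
apply/existsP/existsP => [[x /existsP [g H]]|[x /existsP [g H]]]; exists x; apply/existsP; exists g.
  by move: H; rewrite cyc_cycle translate_lcoset.
by rewrite cyc_cycle translate_lcoset.
Qed.

Lemma card_lines : #|lines m.+1| = #|Cs| * m.+1.
Proof.
rewrite lines_eq -sum1_card (partition_big fL (mem Cs)); last first.
  move=> L; rewrite inE => /existsP [x /existsP [g /andP [og /eqP ->]]].
  change (fL (x *: <[g]>)%g \in Cs); rewrite fL_coset inE; apply/existsP; exists g; by rewrite eqxx.
rewrite -sum_nat_const; apply: eq_bigr => H; rewrite -[mem Cs H]/(H \in Cs) inE => /existsP [a /andP [/eqP -> oa]].
rewrite sum1dep_card.
have -> : [set L | (L \in [set L0 | [exists x, exists g, (#[g]%g == m.+1) && (L0 == x *: <[g]>)%g]]) && (fL L == <[a]>%g)]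
   = lcosets <[a]>%g [set: gT].
  apply/setP => L; rewrite !inE; apply/idP/idP.
    case/andP => /existsP [x /existsP [g /andP [og /eqP ->]]].
    rewrite fL_coset => /eqP ->; apply/lcosetsP; exists x => //; by rewrite inE.
  case/lcosetsP => x _ ->; rewrite fL_coset eqxx andbT.
  by apply/existsP; exists x; apply/existsP; exists a; rewrite oa eqxx.
rewrite card_lcosets.
have := Lagrange (subsetT <[a]>%g); rewrite card_gT -/(order a) (eqP oa).
by move/eqP; rewrite eqn_pmul2l // => /eqP.
Qed.

Lemma card_Es : #|Es| = #|Cs| * totient m.+1.
Proof.
rewrite -sum1_card (partition_big (fun g => <[g]>%g) (mem Cs)); last first.
  move=> g; rewrite !inE => og; apply/existsP; exists g; by rewrite eqxx.
rewrite -sum_nat_const; apply: eq_bigr => H; rewrite -[mem Cs H]/(H \in Cs) inE => /existsP [a /andP [/eqP -> oa]].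
have -> : totient m.+1 = totient #[a]%g by rewrite (eqP oa).
rewrite sum1dep_card totient_gen; apply: eq_card => g.
rewrite !inE /generator.
apply/idP/idP => [/andP [_ /eqP ->] //|/eqP e].
by rewrite /order -e eqxx andbT.
Qed.

Lemma card_Es2 : #|Es| = cnt m.+1.
Proof.
rewrite /cnt -sum1_card.
have -> : \sum_(g in Es) 1 = \sum_(g : gT) (coprime m.+1 (gcdn g.1 g.2) : nat).
  rewrite big_mkcond; apply: eq_bigr => g _; rewrite inE order_full.
  by case: (coprime _ _).
rewrite -(pair_big xpredT xpredT (fun (a b : 'I_m.+1) => (coprime m.+1 (gcdn a b) : nat))) /=.
rewrite big_mkord; apply: eq_bigr => a _; by rewrite big_mkord.
Qed.
End G.
Theorem mainTheorem7 (n : nat) (hn : 0 < n) : #|lines n| = psi (n ^ 2).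
Proof.
case: n hn => [//|m] _.
have t0 : 0 < totient m.+1 by rewrite totient_gt0.
apply/eqP; rewrite -(eqn_pmul2r t0); apply/eqP.
rewrite -cnt_main //.
rewrite (card_lines m) -(card_Es2 m) (card_Es m).
by rewrite mulnAC.
Qed.
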